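(* Let $K\ge 1$, $N\ge1$, and for $k\in\{0,1,\dots,K\}$ let $\bm{H}_k\colon\mathbb{R}^{d_k}\to\mathbb{R}^{N\times E_k}$ be differentiable maps, and let $\Phi\colon\mathbb{R}^{N\times E}\to\mathbb{R}$, $E=\sum_{k=0}^K E_k$, be differentiable. Put $\bm{x}=(\bm{x}_0,\dots,\bm{x}_K)$ and $f(\bm{x})=\Phi(\bm{H}_0(\bm{x}_0),\bm{H}_1(\bm{x}_1),\dots,\bm{H}_K(\bm{x}_K))$. Assume $\Phi$ is $L$-smooth, i.e. $\lVert\nabla\Phi(\bm{U})-\nabla\Phi(\bm{V})\rVert\le L\lVert\bm{U}-\bm{V}\rVert$ for all $\bm{U},\bm{V}$, and that each $\bm{H}_k$ has bounded derivative, i.e. $\lVert\nabla\bm{H}_k(\bm{x}_k)\rVert\le H$ for all $\bm{x}_k$ and all $k\in\{0,\dots,K\}$. Let $\{\bm{x}^t\}$ and $\{\bm{G}^t_k\}$ be the iterates and surrogates generated by the EF-VFL algorithm described in the context, and let $\bm{g}^t=(\bm{g}^t_0,\dots,\bm{g}^t_K)$ and $D^{(t)}$ be as defined there. Then for all $t\ge0$, $$\lVert \bm{g}^{t}-\nabla f(\bm{x}^{t})\rVert^2\le K H^2L^2 D^{(t)}.$$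
   Context: Norms of matrices are Frobenius norms, and the norm of the third-order tensor $\nabla\bm{H}_k(\bm{x}_k)$ is its Euclidean (Frobenius) norm; $\nabla_k$ denotes the partial derivative with respect to the $k$-th block of arguments. A contractive compressor is a (possibly random) map $\mathcal{C}$ with $\mathbb{E}\lVert\mathcal{C}(\bm{v})-\bm{v}\rVert^2\le(1-\alpha)\lVert\bm{v}\rVert^2$ for all $\bm{v}$, for some $\alpha\in(0,1]$, with independent randomness at each application. EF-VFL: surrogates are initialized $\bm{G}^0_k=\mathcal{C}(\bm{H}_k(\bm{x}^0_k))$, $k=0,\dots,K$; at each $t$, $\bm{x}^{t+1}=\bm{x}^t-\eta\tilde{\bm{g}}^t$ and $\bm{G}^{t+1}_k=\bm{G}^t_k+\mathcal{C}(\bm{H}_k(\bm{x}^{t+1}_k)-\bm{G}^t_k)$ for $k=0,\dots,K$. The full surrogate gradient has blocks $\bm{g}^t_k=\sum_{i=1}^N\sum_{j=1}^{E_k}[\tilde\nabla^t_k\Phi]_{ij}[\nabla\bm{H}_k(\bm{x}^t_k)]_{ij:}$ where $\tilde\nabla^t_k\Phi=\nabla_k\Phi(\bm{G}^t_0,\dots,\bm{G}^t_{k-1},\bm{H}_k(\bm{x}^t_k),\bm{G}^t_{k+1},\dots,\bm{G}^t_K)$; $\tilde{\bm{g}}^t$ is its mini-batch analogue computed from the same formula with $\Phi$ replaced by the mini-batch objective on a sampled batch $\mathcal{B}^t\subseteq[N]$ of size $B$ and only the corresponding rows of $\bm{H}_k,\bm{G}_k$. The total distortion is $D^{(t)}=\sum_{k=0}^K\lVert\bm{G}^t_k-\bm{H}_k(\bm{x}^t_k)\rVert^2$.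 *)

(* Defs.v *)
From HB Require Import structures.
From mathcomp Require Import all_boot all_order all_algebra.
From mathcomp Require Import all_classical all_reals all_analysis.
Set Implicit Arguments. Unset Strict Implicit. Unset Printing Implicit Defensive.
Import Order.TTheory GRing.Theory Num.Theory.
Import numFieldNormedType.Exports.
Local Open Scope ring_scope.

Section EFVFL.
Variable R : realType.

Definition frob (m n : nat) (M : 'M[R]_(m, n)) : R :=
  Num.sqrt (\sum_(i < m) \sum_(j < n) M i j ^+ 2).

Definition grad (m n : nat) (f : 'M[R]_(m, n) -> R) (U : 'M[R]_(m, n))
  : 'M[R]_(m, n) := \matrix_(i, j) ('d f U : 'M[R]_(m, n) -> R^o) (delta_mx i j).

(* Third-order Jacobian tensor of a matrix-valued map H : R^{d} -> R^{N x E}: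
   [jac H x] i j is the row vector [nabla H(x)]_{ij:} whose l-th entry is
   d H_{ij} / d x_l. *)
Definition jac (d N E : nat) (H : 'rV[R]_d -> 'M[R]_(N, E)) (x : 'rV[R]_d)
  : 'I_N -> 'I_E -> 'rV[R]_d :=
  fun i j => \row_l (('d H x : 'rV[R]_d -> 'M[R]_(N, E)) (delta_mx 0 l)) i j.

Definition tensor_norm (d N E : nat) (T : 'I_N -> 'I_E -> 'rV[R]_d) : R :=
  Num.sqrt (\sum_(i < N) \sum_(j < E) \sum_(l < d) (T i j) 0 l ^+ 2).

End EFVFL.

(* Main.v *)
Require Import Defs.
From HB Require Import structures.
From mathcomp Require Import all_boot all_order all_algebra.
From mathcomp Require Import all_classical all_reals all_analysis.
From mathcomp Require Import ring lra.
Import Order.TTheory GRing.Theory Num.Theory.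
Import numFieldNormedType.Exports.
Local Open Scope ring_scope.

Section Helpers.
Variable R : realType.

Lemma sum_Rank (p : nat) (q : 'I_p -> nat) (F : 'I_(\sum_(k < p) q k) -> R) :
  \sum_c F c = \sum_(k < p) \sum_(j < q k) F (tagnat.Rank k j).
Proof.
rewrite sig_big_dep /=.
rewrite (reindex _ tagnat.sig_bij_on) /=.
apply: eq_bigr => c _; by rewrite -tagnat.rankE tagnat.sigK.
Qed.

Lemma mxrow_Rank (p m : nat) (q : 'I_p -> nat) (B : forall k, 'M[R]_(m, q k)) k i (j : 'I_(q k)) :
  (\mxrow_k B k) i (tagnat.Rank k j) = B k i j.
Proof.
by have := congr1 (fun M : 'M[R]_(m, q k) => M i j) (mxrowK B k); rewrite /= mxE.
Qed.

Lemma CS (I : finType) (a b : I -> R) :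
  (\sum_i a i * b i) ^+ 2 <= (\sum_i a i ^+ 2) * (\sum_i b i ^+ 2).
Proof.
have H : 0 <= \sum_i \sum_j (a i * b j - a j * b i) ^+ 2.
  by apply: sumr_ge0 => i _; apply: sumr_ge0 => j _; exact: sqr_ge0.
have E : \sum_i \sum_j (a i * b j - a j * b i) ^+ 2 =
   2%:R * ((\sum_i a i ^+ 2) * (\sum_i b i ^+ 2) - (\sum_i a i * b i) ^+ 2).
  have inner : forall i, \sum_j (a i * b j - a j * b i) ^+ 2 =
     \sum_j (a i * b j) ^+ 2 - (\sum_j (a i * b j * (a j * b i))) *+ 2 + \sum_j (a j * b i) ^+ 2.
    move=> i; rewrite -sumrMnl -sumrB -big_split /=; apply: eq_bigr => j _; exact: sqrrB.
  rewrite (eq_bigr _ (fun i _ => inner i)) big_split /= sumrB.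
  have E1 : \sum_i \sum_j (a i * b j) ^+ 2 = (\sum_i a i ^+ 2) * (\sum_i b i ^+ 2).
    rewrite mulr_suml; apply: eq_bigr => i _; rewrite mulr_sumr.
    by apply: eq_bigr => j _; rewrite exprMn.
  have E2 : \sum_i \sum_j (a j * b i) ^+ 2 = (\sum_i a i ^+ 2) * (\sum_i b i ^+ 2).
    rewrite exchange_big /=; rewrite mulr_suml; apply: eq_bigr => i _; rewrite mulr_sumr.
    by apply: eq_bigr => j _; rewrite exprMn.
  have E3 : \sum_i \sum_j (a i * b j * (a j * b i)) = (\sum_i a i * b i) ^+ 2.
    rewrite expr2 mulr_suml; apply: eq_bigr => i _; rewrite mulr_sumr.
    apply: eq_bigr => j _; ring.
  rewrite E1 E2 sumrMnl E3; lra.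
move: H; rewrite E pmulr_rge0 ?ltr0n // subr_ge0 //.
Qed.


Lemma cont_sum (T : topologicalType) (V : normedModType R) (I : Type) (s : seq I)
  (F : I -> T -> V) : (forall i, continuous (F i)) ->
  continuous (fun u => \sum_(i <- s) F i u).
Proof.
move=> HF; elim: s => [|i s IH].
  have -> : (fun u => \sum_(i <- [::]) F i u) = cst 0.
    by apply: funext => u; rewrite big_nil.
  exact: cst_continuous.
have -> : (fun u => \sum_(j <- i :: s) F j u) = F i + (fun u => \sum_(j <- s) F j u).
  by apply: funext => u; rewrite big_cons.
by move=> x; apply: continuousD; [exact: HF | exact: IH].
Qed.

Lemma mxlin_cont a b c e (f : {linear 'M[R]_(a, b) -> 'M[R]_(c, e)}) : continuous f.
Proof.
have fE : (f : _ -> _) = fun u => \sum_(i <- index_enum 'I_a)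
    \sum_(j <- index_enum 'I_b) u i j *: f (delta_mx i j).
  apply: funext => u; rewrite {1}(matrix_sum_delta u) linear_sum.
  by apply: eq_bigr => i _; rewrite linear_sum; apply: eq_bigr => j _; rewrite linearZ.
rewrite fE; apply: cont_sum => i; apply: cont_sum => j x.
apply: continuousZr_tmp; exact: coord_continuous.
Qed.

Lemma diff_sum_ (V W : normedModType R) (I : Type) (s : seq I) (F : I -> V -> W) x :
  (forall i, differentiable (F i) x) ->
  (differentiable (fun y => \sum_(i <- s) F i y) x) /\
  (('d (fun y => \sum_(i <- s) F i y) x : V -> W) = (fun v => \sum_(i <- s) 'd (F i) x v)).
Proof.
move=> HF; elim: s => [|i s [IH1 IH2]].
  have -> : (fun y => \sum_(i <- [::]) F i y) = cst 0.
    by apply: funext => u; rewrite big_nil.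
  split; first exact: differentiable_cst.
  by rewrite diff_cst; apply: funext => v; rewrite big_nil.
have -> : (fun u => \sum_(j <- i :: s) F j u) = F i + (fun u => \sum_(j <- s) F j u).
  by apply: funext => u; rewrite big_cons.
split; first exact: differentiableD.
rewrite diffD // IH2; apply: funext => v; by rewrite big_cons.
Qed.

Lemma frob2 m p (M : 'M[R]_(m, p)) : frob M ^+ 2 = \sum_i \sum_j M i j ^+ 2.
Proof.
rewrite /frob sqr_sqrtr //; apply: sumr_ge0 => i _; apply: sumr_ge0 => j _.
exact: sqr_ge0.
Qed.

Lemma frob_ge0 m p (M : 'M[R]_(m, p)) : 0 <= frob M.
Proof. exact: sqrtr_ge0. Qed.

Lemma mxsubE m p (A B : 'M[R]_(m, p)) i j : (A - B) i j = A i j - B i j.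
Proof. by rewrite !mxE. Qed.

Lemma mxaddE m p (A B : 'M[R]_(m, p)) i j : (A + B) i j = A i j + B i j.
Proof. by rewrite !mxE. Qed.

End Helpers.
Arguments sum_Rank {R p q}.
Arguments CS {R I}.
Arguments frob_ge0 {R m p}.

Section T.
Variable R : realType.
Variables (K N : nat) (d Ek : 'I_K.+1 -> nat).
Variable H : forall k : 'I_K.+1, 'rV[R]_(d k) -> 'M[R]_(N, Ek k).
Variable Phi : 'M[R]_(N, \sum_(k < K.+1) Ek k) -> R.
Hypothesis dH : forall k xk, differentiable (H k) xk.
Hypothesis dPhi : forall U, differentiable Phi U.

Local Notation n := (\sum_(k < K.+1) Ek k).
Local Notation dd := (\sum_(k < K.+1) d k).

Definition Sm k : 'M[R]_(dd, d k) := \matrix_(c, l) (c == tagnat.Rank k l)%:R.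
Definition Qm k : 'M[R]_(Ek k, n) := \matrix_(j, c) (c == tagnat.Rank k j)%:R.
Definition Msum (y : 'rV[R]_dd) : 'M[R]_(N, n) := \sum_k (H k (y *m Sm k)) *m Qm k.

Lemma subE (y : 'rV[R]_dd) k : y *m Sm k = submxrow y k.
Proof.
apply/matrixP => i l; rewrite !mxE (bigD1 (tagnat.Rank k l)) //= mxE eqxx mulr1.
rewrite [X in _ + X]big1 ?addr0 // => c /negbTE hc; by rewrite mxE hc mulr0.
Qed.

Lemma rowE (B : forall k, 'M[R]_(N, Ek k)) : \sum_k B k *m Qm k = \mxrow_k B k.
Proof.
apply/matrixP => i c; rewrite summxE mxE.
rewrite (bigD1 (tagnat.sig1 c)) //= [X in _ + X]big1 ?addr0.
  rewrite mxE (bigD1 (tagnat.sig2 c)) //= mxE tagnat.sig2K eqxx mulr1.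
  rewrite [X in _ + X]big1 ?addr0 // => j hj; rewrite mxE.
  suff -> : (c == tagnat.Rank (tagnat.sig1 c) j) = false by rewrite mulr0.
  apply/negbTE; rewrite -{1}(tagnat.sig2K c) -val_eqE /= tagnat.eq_Rank eqxx /=.
  by rewrite eq_sym.
move=> k hk; rewrite mxE big1 // => j _; rewrite mxE.
suff -> : (c == tagnat.Rank k j) = false by rewrite mulr0.
apply/negbTE; rewrite -{1}(tagnat.sig2K c) -val_eqE /= tagnat.eq_Rank.
by rewrite eq_sym (negbTE hk).
Qed.


Lemma dMsum (X : 'rV[R]_dd) : differentiable Msum X /\
  (('d Msum X : 'rV[R]_dd -> 'M[R]_(N, n)) =
    fun v => \sum_k ('d (H k) (X *m Sm k) (v *m Sm k)) *m Qm k).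
Proof.
pose F k := (mulmxr (Qm k)) \o (H k \o mulmxr (Sm k)).
have cS k : continuous (mulmxr (Sm k)) := @mxlin_cont R _ _ _ _ (mulmxr (Sm k)).
have cQ k : continuous (mulmxr (Qm k)) := @mxlin_cont R _ _ _ _ (mulmxr (Qm k)).
have dF1 k : differentiable (H k \o mulmxr (Sm k)) X.
  apply: differentiable_comp; [exact: linear_differentiable (cS 1%N k) | exact: dH].
have dF k : differentiable (F k) X.
  apply: differentiable_comp; [exact: dF1 | exact: linear_differentiable (cQ N k)].
have [D1 D2] := @diff_sum_ R _ _ _ (index_enum 'I_K.+1) F X dF.
have eM : Msum = (fun y => \sum_(k <- index_enum 'I_K.+1) F k y) by [].
rewrite eM; split => //; rewrite D2; apply: funext => v; apply: eq_bigr => k _.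
rewrite /F (diff_comp (dF1 k) (linear_differentiable _ (cQ N k))) /=.
rewrite (diff_lin _ (cQ N k)) /= (diff_comp (linear_differentiable _ (cS 1%N k)) (dH _ _)) /=.
by rewrite (diff_lin _ (cS 1%N k)).
Qed.


Lemma MsumE (y : 'rV[R]_dd) : Msum y = \mxrow_k H k (submxrow y k).
Proof. by rewrite /Msum -rowE; apply: eq_bigr => k _; rewrite subE. Qed.

Lemma dlin_expand (U W : 'M[R]_(N, n)) :
  ('d Phi U : 'M[R]_(N, n) -> R^o) W = \sum_i \sum_c W i c * grad Phi U i c.
Proof.
rewrite {1}(matrix_sum_delta W) linear_sum; apply: eq_bigr => i _.
rewrite linear_sum; apply: eq_bigr => c _; rewrite linearZ /= mxE.
by [].
Qed.

Lemma gradf_entry (X : 'rV[R]_dd) k (l : 'I_(d k)) :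
  let f := fun y : 'rV[R]_dd => Phi (\mxrow_(k < K.+1) H k (submxrow y k)) in
  (grad f X) 0 (tagnat.Rank k l) =
  \sum_i \sum_j ('d (H k) (submxrow X k) (delta_mx 0 l)) i j *
      grad Phi (\mxrow_k H k (submxrow X k)) i (tagnat.Rank k j).
Proof.
move=> f.
have fE : f = Phi \o Msum by apply: funext => y; rewrite /f /= MsumE.
have [dM1 dM2] := dMsum X.
rewrite /grad mxE fE (diff_comp dM1 (dPhi _)) /= dM2 /= MsumE.
have -> : \sum_k0 ('d (H k0) (X *m Sm k0) (delta_mx 0 (tagnat.Rank k l) *m Sm k0)) *m Qm k0
    = ('d (H k) (submxrow X k) (delta_mx 0 l)) *m Qm k.
  rewrite (bigD1 (R := 'M[R]_(N, n)) k) //= [X in _ + X]big1; last first.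
    move=> k' hk'.
    suff -> : delta_mx 0 (tagnat.Rank k l) *m Sm k' = 0 :> 'rV[R]_(d k') by rewrite linear0 mul0mx.
    apply/matrixP => i l'; rewrite subE !mxE.
    suff -> : (tagnat.Rank k' l' == tagnat.Rank k l) = false by rewrite andbF.
    apply/negbTE; rewrite -val_eqE /= tagnat.eq_Rank.
    by rewrite (negbTE hk').
  have -> : delta_mx 0 (tagnat.Rank k l) *m Sm k = delta_mx 0 l :> 'rV[R]_(d k).
    apply/matrixP => i l'; rewrite subE !mxE.
    congr (_ && _)%:R.
    by rewrite -val_eqE /= tagnat.eq_Rank eqxx /= val_eqE.
  by rewrite subE addr0.
rewrite dlin_expand; apply: eq_bigr => i _.
have mE : forall (W : 'M[R]_(N, Ek k)) c, (W *m Qm k) i c =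
    \sum_j W i j * (c == tagnat.Rank k j)%:R.
  by move=> W c; rewrite mxE; apply: eq_bigr => j _; rewrite mxE.
set W := 'd (H k) (submxrow X k) (delta_mx 0 l).
set g := grad Phi _.
transitivity (\sum_c \sum_j W i j * (c == tagnat.Rank k j)%:R * g i c).
  by apply: eq_bigr => c _; rewrite mE mulr_suml.
rewrite exchange_big /=; apply: eq_bigr => j _.
rewrite (bigD1 (tagnat.Rank k j)) //= mxE eqxx mulr1 [X in _ + X]big1 ?addr0.
  by [].
by move=> c /negbTE hc; rewrite hc mulr0 mul0r.
Qed.

End T.

Theorem lemma1 (R : realType) (K N : nat) (d Ek : 'I_K.+1 -> nat)
  (H : forall k : 'I_K.+1, 'rV[R]_(d k) -> 'M[R]_(N, Ek k))
  (Phi : 'M[R]_(N, \sum_(k < K.+1) Ek k) -> R)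
  (L Hb : R)
  (eta : R)
  (C : nat -> forall k : 'I_K.+1, 'M[R]_(N, Ek k) -> 'M[R]_(N, Ek k))
  (gtil : nat -> 'rV[R]_(\sum_(k < K.+1) d k))
  (x : nat -> 'rV[R]_(\sum_(k < K.+1) d k))
  (G : nat -> forall k : 'I_K.+1, 'M[R]_(N, Ek k)) :
  (1 <= K)%N -> (1 <= N)%N ->
  (forall k xk, differentiable (H k) xk) ->
  (forall U, differentiable Phi U) ->
  (forall U V, frob (grad Phi U - grad Phi V) <= L * frob (U - V)) ->
  (forall k xk, tensor_norm (jac (H k) xk) <= Hb) ->
  (forall k, G 0%N k = C 0%N k (H k (submxrow (x 0%N) k))) ->
  (forall t, x t.+1 = x t - eta *: gtil t) ->
  (forall t k, G t.+1 k = G t k + C t.+1 k (H k (submxrow (x t.+1) k) - G t k)) ->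
  let f := fun y : 'rV[R]_(\sum_(k < K.+1) d k) =>
             Phi (\mxrow_(k < K.+1) H k (submxrow y k)) in
  let mixed := fun t (k : 'I_K.+1) =>
       \mxrow_(l < K.+1) G t l
     + \mxrow_(l < K.+1) (if l == k then H l (submxrow (x t) l) - G t l else 0) in
  let g := fun t (k : 'I_K.+1) =>
       \sum_(i < N) \sum_(j < Ek k)
          (submxrow (grad Phi (mixed t k)) k) i j *: jac (H k) (submxrow (x t) k) i j in
  let D := fun t => \sum_(k < K.+1) frob (G t k - H k (submxrow (x t) k)) ^+ 2 in
  forall t : nat,
    frob (\mxrow_(k < K.+1) g t k - grad f (x t)) ^+ 2
      <= K%:R * Hb ^+ 2 * L ^+ 2 * D t.
Proof.
move=> K1 N1 dH dPhi Lip Hbnd _ _ _ f mixed g D t.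
set X := x t.
set U := \mxrow_k H k (submxrow X k).
pose A k := grad Phi (mixed t k) - grad Phi U.
pose J k i j (l : 'I_(d k)) := ('d (H k) (submxrow X k) (delta_mx 0 l)) i j.
pose dk l := \sum_i \sum_j (G t l i j - H l (submxrow X l) i j) ^+ 2.
have Hb0 : 0 <= Hb by apply: le_trans (Hbnd ord0 0); exact: sqrtr_ge0.
have entry : forall k l, (\mxrow_k g t k - grad f X) 0 (tagnat.Rank k l) =
    \sum_i \sum_j A k i (tagnat.Rank k j) * J k i j l.
  move=> k l; rewrite mxsubE mxrow_Rank.
  rewrite (@gradf_entry R K N d Ek H Phi dH dPhi X k l).
  rewrite /g summxE -sumrB; apply: eq_bigr => i _.
  rewrite summxE -sumrB; apply: eq_bigr => j _.
  rewrite /A /J mxsubE [X in X - _]mxE [X in X * _ - _]mxE /jac [X in _ * X - _]mxE -/X -/U.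
  by rewrite mulrBl; congr (_ - _); exact: mulrC.
have mixE : forall k i l' (j : 'I_(Ek l')), (mixed t k - U) i (tagnat.Rank l' j) =
    if l' == k then 0 else G t l' i j - H l' (submxrow (x t) l') i j.
  move=> k i l' j; rewrite mxsubE /mixed mxaddE /U !mxrow_Rank.
  case: ifP => _.
    by rewrite /X [X in _ + X - _]mxE [X in _ + (_ + X) - _]mxE [G t l' i j + _]addrC subrK subrr.
  by rewrite /X [X in _ + X - _]mxE addr0.
have fr_mix : forall k, frob (mixed t k - U) ^+ 2 = \sum_l' (if l' == k then 0 else dk l').
  move=> k; rewrite frob2.
  transitivity (\sum_i \sum_l' \sum_j ((mixed t k - U) i (tagnat.Rank l' j)) ^+ 2).
    by apply: eq_bigr => i _; rewrite (sum_Rank (fun c => (mixed t k - U) i c ^+ 2)).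
  rewrite exchange_big /=; apply: eq_bigr => l' _.
  transitivity (\sum_i \sum_j (if l' == k then 0 else G t l' i j - H l' (submxrow (x t) l') i j) ^+ 2).
    by apply: eq_bigr => i _; apply: eq_bigr => j _; rewrite mixE.
  rewrite /dk; case: ifP => _ //.
  rewrite big1 // => i _; rewrite big1 // => j _; by rewrite expr2 mul0r.
have aK : forall k, \sum_i \sum_j (A k i (tagnat.Rank k j)) ^+ 2 <= frob (A k) ^+ 2.
  move=> k; rewrite frob2; apply: ler_sum => i _.
  rewrite (sum_Rank (fun c => A k i c ^+ 2)) (bigD1 (R := R) k) //= lerDl.
  by apply: sumr_ge0 => k' _; apply: sumr_ge0 => j _; exact: sqr_ge0.
have AL : forall k, frob (A k) ^+ 2 <= L ^+ 2 * frob (mixed t k - U) ^+ 2.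
  move=> k; have h := Lip (mixed t k) U.
  have := ler_pM (frob_ge0 _) (frob_ge0 _) h h.
  by rewrite mulrACA -!expr2.
have tn : forall k, \sum_l \sum_i \sum_j (J k i j l) ^+ 2 <= Hb ^+ 2.
  move=> k; have h := Hbnd k (submxrow X k).
  have e : tensor_norm (jac (H k) (submxrow X k)) ^+ 2 = \sum_l \sum_i \sum_j (J k i j l) ^+ 2.
    rewrite /tensor_norm sqr_sqrtr; last first.
      by apply: sumr_ge0 => i _; apply: sumr_ge0 => j _; apply: sumr_ge0 => l _; exact: sqr_ge0.
    transitivity (\sum_i \sum_l \sum_j (J k i j l) ^+ 2); last by rewrite exchange_big.
    apply: eq_bigr => i _; rewrite exchange_big; apply: eq_bigr => l _.
    by apply: eq_bigr => j _; rewrite /jac mxE.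
  rewrite -e; have tz : 0 <= tensor_norm (jac (H k) (submxrow X k)) by exact: sqrtr_ge0.
  by rewrite !expr2; exact: (ler_pM tz tz h h).
have bound_k : forall k, \sum_l (\sum_i \sum_j A k i (tagnat.Rank k j) * J k i j l) ^+ 2
    <= Hb ^+ 2 * L ^+ 2 * \sum_l' (if l' == k then 0 else dk l').
  move=> k.
  set a := \sum_i \sum_j (A k i (tagnat.Rank k j)) ^+ 2.
  apply: (le_trans (y := \sum_l a * \sum_i \sum_j (J k i j l) ^+ 2)).
    apply: ler_sum => l _.
    have := CS (fun p : 'I_N * 'I_(Ek k) => A k p.1 (tagnat.Rank k p.2)) (fun p => J k p.1 p.2 l).
    by move=> hcs; rewrite /a !pair_bigA /=.
  rewrite -mulr_sumr.
  have a0 : 0 <= a by apply: sumr_ge0 => i _; apply: sumr_ge0 => j _; exact: sqr_ge0.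
  apply: le_trans (ler_wpM2l a0 (tn k)) _.
  rewrite -fr_mix mulrC -mulrA; apply: ler_wpM2l; first exact: sqr_ge0.
  exact: (le_trans (aK k) (AL k)).
have cnt : forall l', \sum_k (if l' == k then 0 else dk l') = K%:R * dk l'.
  move=> l'.
  transitivity (\sum_k (dk l' - (l' == k)%:R * dk l')).
    by apply: eq_bigr => k _; case: eqP => _; rewrite ?mul1r ?mul0r ?subrr ?subr0.
  rewrite sumrB sumr_const card_ord (bigD1 (R := R) l') //= eqxx mul1r.
  rewrite [X in dk l' + X]big1 ?addr0; last by move=> k hk; rewrite eq_sym (negbTE hk) mul0r.
  by rewrite mulrSr addrK mulr_natl.
have DE : D t = \sum_l dk l.
  rewrite /D; apply: eq_bigr => l _; rewrite frob2; apply: eq_bigr => i _.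
  by apply: eq_bigr => j _; rewrite mxsubE.
apply: (le_trans (y := \sum_k Hb ^+ 2 * L ^+ 2 * \sum_l' (if l' == k then 0 else dk l'))).
  rewrite frob2 big_ord1 (sum_Rank (fun c => (\mxrow_k g t k - grad f X) ord0 c ^+ 2)).
  apply: ler_sum => k _.
  rewrite (eq_bigr (fun l => (\sum_i \sum_j A k i (tagnat.Rank k j) * J k i j l) ^+ 2)).
    exact: bound_k.
  by move=> l _; congr (_ ^+ 2); exact: entry.
rewrite -mulr_sumr exchange_big /= (eq_bigr _ (fun l _ => cnt l)) -mulr_sumr DE.
by rewrite mulrA [Hb ^+ 2 * L ^+ 2 * K%:R]mulrC !mulrA.
Qed.
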